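(* Let two groups of positive integer moduli be given: Group $j$ ($j=1,2$) consists of $L_j\ge1$ moduli $0<M_{j,1}<\dots<M_{j,L_j}$; put $\delta_j=\operatorname{lcm}(M_{j,1},\dots,M_{j,L_j})$ and assume $\delta_1\ne\delta_2$. Let $N$ be an integer with $0\le N<\operatorname{lcm}(\delta_1,\delta_2)$, let $r_{j,i}$ be the remainder of $N$ modulo $M_{j,i}$ and $n_{j,i}=(N-r_{j,i})/M_{j,i}$. Let $\tilde r_{j,i}$ be integers with $0\le\tilde r_{j,i}\le M_{j,i}-1$ and $|\tilde r_{j,i}-r_{j,i}|\le\tau_j$ for all $i$, where $$\tau_j<\min(G_j,G)\quad (j=1,2),$$ with $G_j=\max_{1\le i\le L_j}\min_{q\ne i}\gcd(M_{j,i},M_{j,q})/4$ if $L_j\ge2$, $G_j=M_{j,1}/4$ if $L_j=1$, and $G=\gcd(\delta_1,\delta_2)/4$. Then the two-stage algorithm (described in the context) outputs $\hat n_{j,i}=n_{j,i}$ for all $1\le i\le L_j$, $j=1,2$, and its estimate $\hat N$ satisfies $$|\hat N-N|\le\left[\frac{L_1\tau_1+L_2\tau_2}{L_1+L_2}\right].$$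
   Context: For $x\in\mathbb R$, $[x]$ denotes the unique integer with $-1/2\le x-[x]<1/2$. Single-stage algorithm $\mathcal A$: for pairwise distinct positive integers $P_1,\dots,P_m$ ($m\ge2$), a reference index $k$ and integers $x_1,\dots,x_m$: for $i\ne k$ put $m_{ki}=\gcd(P_k,P_i)$, $\Gamma_{ki}=P_k/m_{ki}$, $\Gamma_{ik}=P_i/m_{ki}$, $\hat q_{ik}=[(x_i-x_k)/m_{ki}]$, let $\bar\Gamma_{ki}$ be an inverse of $\Gamma_{ki}$ modulo $\Gamma_{ik}$ and $\hat\xi_{ik}\equiv\hat q_{ik}\bar\Gamma_{ki}\pmod{\Gamma_{ik}}$, $0\le\hat\xi_{ik}<\Gamma_{ik}$; let $\hat n_k$ be the least nonnegative $y$ with $y\equiv\hat\xi_{ik}\pmod{\Gamma_{ik}}$ for all $i\ne k$ (the algorithm fails if none exists), and $\hat n_i=(\hat n_k\Gamma_{ki}-\hat q_{ik})/\Gamma_{ik}$ for $i\ne k$. Two-stage algorithm: Stage 1: for each group $j$, if $L_j\ge2$ apply $\mathcal A$ to $M_{j,1},\dots,M_{j,L_j}$ with inputs $\tilde r_{j,1},\dots,\tilde r_{j,L_j}$ and a reference index $k_j$ attaining $\max_i\min_{q\ne i}\gcd(M_{j,i},M_{j,q})$, obtaining $\hat K_{j,1},\dots,\hat K_{j,L_j}$; if $L_j=1$ set $\hat K_{j,1}=0$. Put $\hat N_j=[\frac1{L_j}\sum_{i=1}^{L_j}(\hat K_{j,i}M_{j,i}+\tilde r_{j,i})]$. Stage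 2: apply $\mathcal A$ to the moduli $\delta_1,\delta_2$ with inputs $\hat N_1,\hat N_2$ (any reference index), obtaining $\hat l_1,\hat l_2$. Output $\hat n_{j,i}=\hat l_j\delta_j/M_{j,i}+\hat K_{j,i}$ and $\hat N=[\frac1{L_1+L_2}\sum_{j=1}^2\sum_{i=1}^{L_j}(\hat n_{j,i}M_{j,i}+\tilde r_{j,i})]$. *)

(* Defs.v *)
From Stdlib Require Import ZArith Reals List.
Import ListNotations.
Open Scope Z_scope.

(* [x] : the unique integer z with -1/2 <= x - z < 1/2, i.e. floor (x + 1/2).
   (up y is the least integer > y, so up y - 1 = floor y.) *)
Definition round (x : R) : Z := (up (x + / 2) - 1)%Z.

(* Indices are 0-based: index i of the paper is i-1 here. *)
Definition sumZ (n : nat) (f : nat -> Z) : Z := fold_right Z.add 0 (map f (seq 0 n)).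
Definition lcmZ (n : nat) (f : nat -> Z) : Z := fold_right Z.lcm 1 (map f (seq 0 n)).

Definition list_min (l : list Z) : Z :=
  match l with [] => 0 | x :: t => fold_left Z.min t x end.
Definition list_max (l : list Z) : Z :=
  match l with [] => 0 | x :: t => fold_left Z.max t x end.

Definition min_gcd (L : nat) (M : nat -> Z) (i : nat) : Z :=
  list_min (map (fun q => Z.gcd (M i) (M q))
                (filter (fun q => negb (Nat.eqb q i)) (seq 0 L))).

Definition G_grp (L : nat) (M : nat -> Z) : R :=
  if (2 <=? L)%nat then (IZR (list_max (map (min_gcd L M) (seq 0 L))) / 4)%R
  else (IZR (M 0%nat) / 4)%R.

Fixpoint find_from (f : Z -> bool) (start : Z) (n : nat) : option Z :=
  match n with
  | O => None
  | S n' => if f start then Some start else find_from f (start + 1) n'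
  end.

(* None = failure.
   - the inverse of Gamma_ki modulo Gamma_ik is found by search in [0, Gamma_ik)
     (it always exists since Gamma_ki, Gamma_ik are coprime; the result of the
     algorithm does not depend on the choice of the inverse);
   - the least nonnegative simultaneous solution y, if one exists, is < lcm of
     the Gamma_ik <= their product, so searching [0, prod Gamma_ik) is exact. *)
Definition alg_A (m : nat) (P : nat -> Z) (k : nat) (x : nat -> Z)
  : option (nat -> Z) :=
  let mk i := Z.gcd (P k) (P i) in
  let Gki i := P k / mk i in
  let Gik i := P i / mk i in
  let qh i := round (IZR (x i - x k) / IZR (mk i)) in
  let inv i :=
    match find_from (fun b => (Gki i * b) mod Gik i =? 1 mod Gik i) 0
                    (Z.to_nat (Gik i)) with
    | Some b => b | None => 0 end in
  let xi i := (qh i * inv i) mod Gik i in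
  let others := filter (fun i => negb (Nat.eqb i k)) (seq 0 m) in
  let bound := fold_right Z.mul 1 (map Gik others) in
  match find_from (fun y => forallb (fun i => (y - xi i) mod Gik i =? 0) others)
                  0 (Z.to_nat bound) with
  | None => None
  | Some nk =>
      Some (fun i => if Nat.eqb i k then nk else (nk * Gki i - qh i) / Gik i)
  end.

Definition stage1 (L : nat) (M : nat -> Z) (k : nat) (rt : nat -> Z)
  : option (nat -> Z) :=
  if (2 <=? L)%nat then alg_A L M k rt else Some (fun _ => 0).

Definition Nhat_grp (L : nat) (M Kh rt : nat -> Z) : Z :=
  round (IZR (sumZ L (fun i => Kh i * M i + rt i)) / INR L).

(* Two-stage algorithm; output (nhat_1, nhat_2, Nhat) or None on failure.
   k1, k2: stage-1 reference indices; k0 in {0,1}: stage-2 reference index. *)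
Definition two_stage (L1 : nat) (M1 rt1 : nat -> Z) (k1 : nat)
                     (L2 : nat) (M2 rt2 : nat -> Z) (k2 : nat) (k0 : nat)
  : option ((nat -> Z) * (nat -> Z) * Z) :=
  match stage1 L1 M1 k1 rt1, stage1 L2 M2 k2 rt2 with
  | Some K1, Some K2 =>
      let d1 := lcmZ L1 M1 in
      let d2 := lcmZ L2 M2 in
      let N1 := Nhat_grp L1 M1 K1 rt1 in
      let N2 := Nhat_grp L2 M2 K2 rt2 in
      match alg_A 2 (fun j => if Nat.eqb j 0 then d1 else d2) k0
                    (fun j => if Nat.eqb j 0 then N1 else N2) with
      | None => None
      | Some l =>
          let n1 i := l 0%nat * d1 / M1 i + K1 i in
          let n2 i := l 1%nat * d2 / M2 i + K2 i in
          Some (n1, n2,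
                round (IZR (sumZ L1 (fun i => n1 i * M1 i + rt1 i)
                            + sumZ L2 (fun i => n2 i * M2 i + rt2 i))
                       / INR (L1 + L2)))
      end
  | _, _ => None
  end.

(* Main.v *)
Require Import Defs.
From Stdlib Require Import ZArith Reals List Lia Lra.
Open Scope Z_scope.

Lemma round_char (x : R) (z : Z) :
  (IZR z - /2 <= x)%R -> (x < IZR z + /2)%R -> round x = z.
Proof.
  intros H1 H2. unfold round.
  assert (z + 1 = up (x + /2)) as E.
  { apply tech_up; rewrite ?plus_IZR; simpl; lra. }
  lia.
Qed.

Lemma round_spec (x : R) : (IZR (round x) - /2 <= x /\ x < IZR (round x) + /2)%R.
Proof.
  unfold round. destruct (archimed (x + /2)) as [H1 H2].
  rewrite minus_IZR. simpl. lra.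
Qed.

Lemma round_IZR_add (z : Z) (x : R) : round (IZR z + x) = z + round x.
Proof.
  destruct (round_spec x). apply round_char; rewrite plus_IZR; lra.
Qed.

Lemma round_mono (x y : R) : (x <= y)%R -> round x <= round y.
Proof.
  intros H. destruct (round_spec x), (round_spec y).
  destruct (Z_le_gt_dec (round x) (round y)) as [|G]; auto.
  assert (round y + 1 <= round x) as G' by lia. apply IZR_le in G'.
  rewrite plus_IZR in G'. simpl in G'. lra.
Qed.

Lemma round_IZR (z : Z) : round (IZR z) = z.
Proof. apply round_char; lra. Qed.

Lemma round_opp_le (b : R) : 0 <= round b + round (- b).
Proof.
  destruct (round_spec b), (round_spec (-b)).
  destruct (Z_le_gt_dec 0 (round b + round (-b))) as [|G]; auto.
  assert (round b + round (-b) <= -1) as G' by lia. apply IZR_le in G'.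
  rewrite plus_IZR in G'. lra.
Qed.

Lemma round_abs_le (x B : R) : (Rabs x <= B)%R -> Z.abs (round x) <= round B.
Proof.
  intros H. assert (-B <= x <= B)%R as [H1 H2] by (revert H; unfold Rabs; destruct (Rcase_abs x); lra).
  pose proof (round_mono x B ltac:(lra)).
  pose proof (round_mono (-B) x ltac:(lra)).
  pose proof (round_opp_le B). lia.
Qed.

Lemma round_exact (s d g : Z) :
  0 < g -> (g | s) -> 2 * Z.abs d < g -> round (IZR (s + d) / IZR g) = s / g.
Proof.
  intros Hg [c Hc] Hd. subst s. rewrite Z_div_mult by lia.
  apply round_char.
  - assert (IZR (2 * Z.abs d) < IZR g)%R as E by (apply IZR_lt; lia).
    rewrite mult_IZR in E. apply IZR_lt in Hg.
    apply (Rmult_le_reg_r (IZR g)); [lra|].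
    unfold Rdiv. rewrite Rmult_assoc, Rinv_l by lra. rewrite plus_IZR, mult_IZR.
    assert (- IZR (Z.abs d) <= IZR d)%R. { rewrite <- opp_IZR. apply IZR_le. lia. }
    nra.
  - assert (IZR (2 * Z.abs d) < IZR g)%R as E by (apply IZR_lt; lia).
    rewrite mult_IZR in E. apply IZR_lt in Hg.
    apply (Rmult_lt_reg_r (IZR g)); [lra|].
    unfold Rdiv. rewrite Rmult_assoc, Rinv_l by lra. rewrite plus_IZR, mult_IZR.
    assert (IZR d <= IZR (Z.abs d))%R. { apply IZR_le. lia. }
    nra.
Qed.

Lemma round_bounded (s T : Z) (n : nat) :
  (0 < n)%nat -> Z.abs s <= Z.of_nat n * T -> Z.abs (round (IZR s / INR n)) <= T.
Proof.
  intros Hn Hs.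
  assert (Rabs (IZR s / INR n) <= IZR T)%R.
  { rewrite INR_IZR_INZ. assert (0 < IZR (Z.of_nat n))%R by (apply IZR_lt; lia).
    unfold Rdiv. rewrite Rabs_mult, Rabs_inv, (Rabs_right (IZR (Z.of_nat n))) by lra.
    apply (Rmult_le_reg_r (IZR (Z.of_nat n))); [lra|].
    rewrite Rmult_assoc, Rinv_l by lra. rewrite Rmult_1_r.
    rewrite Rabs_Zabs, <- mult_IZR. apply IZR_le. lia. }
  pose proof (round_abs_le _ _ H). rewrite round_IZR in H0. exact H0.
Qed.

Lemma IZR_le_floor (z : Z) (t : R) : (IZR z <= t)%R -> z <= up t - 1.
Proof.
  intros H. destruct (archimed t) as [H1 H2].
  destruct (Z_le_gt_dec z (up t - 1)); auto.
  assert (up t <= z) as G by lia. apply IZR_le in G. lra.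
Qed.

Lemma floor_le (t : R) : (IZR (up t - 1) <= t)%R.
Proof. destruct (archimed t). rewrite minus_IZR. simpl. lra. Qed.

Lemma find_from_complete f n s z :
  f z = true -> s <= z < s + Z.of_nat n ->
  exists y, find_from f s n = Some y /\ s <= y <= z /\ f y = true.
Proof.
  revert s. induction n as [|n IH]; intros s Hf Hz. simpl in *. lia.
  rewrite Nat2Z.inj_succ in Hz. simpl.
  destruct (f s) eqn:Fs. exists s; repeat split; auto; lia.
  destruct (Z.eq_dec z s). subst. congruence.
  destruct (IH (s+1) Hf ltac:(lia)) as [y [H1 [H2 H3]]].
  exists y; repeat split; auto; lia.
Qed.

Lemma find_from_sound f n s y : find_from f s n = Some y -> f y = true.
Proof.
  revert s. induction n; simpl; intros s H. discriminate.
  destruct (f s) eqn:E. inversion H; subst; auto. eauto.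
Qed.

Lemma fold_add_init l a : fold_right Z.add a l = fold_right Z.add 0 l + a.
Proof. induction l; simpl; lia. Qed.

Lemma sumZ_S n f : sumZ (S n) f = sumZ n f + f n.
Proof.
  unfold sumZ. rewrite seq_S, map_app, fold_right_app. simpl.
  rewrite fold_add_init. lia.
Qed.

Lemma sumZ_ext n f g : (forall i, (i < n)%nat -> f i = g i) -> sumZ n f = sumZ n g.
Proof.
  induction n; intros H. reflexivity.
  rewrite !sumZ_S, IHn by (intros; apply H; lia). rewrite H by lia. reflexivity.
Qed.

Lemma sumZ_add n f g : sumZ n (fun i => f i + g i) = sumZ n f + sumZ n g.
Proof. induction n. reflexivity. rewrite !sumZ_S, IHn. lia. Qed.

Lemma sumZ_const n c : sumZ n (fun _ => c) = Z.of_nat n * c.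
Proof. induction n. reflexivity. rewrite sumZ_S, IHn. lia. Qed.

Lemma sumZ_bound n f T : (forall i, (i < n)%nat -> Z.abs (f i) <= T) ->
  Z.abs (sumZ n f) <= Z.of_nat n * T.
Proof.
  induction n; intros H. simpl. unfold sumZ. simpl. lia.
  rewrite sumZ_S. specialize (IHn ltac:(intros; apply H; lia)).
  specialize (H n ltac:(lia)). lia.
Qed.

Lemma sumZ_boundR n f (t : R) : (forall i, (i < n)%nat -> (Rabs (IZR (f i)) <= t)%R) ->
  (Rabs (IZR (sumZ n f)) <= INR n * t)%R.
Proof.
  induction n; intros H. unfold sumZ; simpl. rewrite Rabs_R0. lra.
  rewrite sumZ_S, plus_IZR, S_INR. specialize (IHn ltac:(intros; apply H; lia)).
  specialize (H n ltac:(lia)). pose proof (Rabs_triang (IZR (sumZ n f)) (IZR (f n))). lra.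
Qed.

Lemma lcm_list_div l x : In x l -> (x | fold_right Z.lcm 1 l).
Proof.
  induction l; simpl; intros H. contradiction.
  destruct H. subst. apply Z.divide_lcm_l.
  eapply Z.divide_trans. apply IHl; auto. apply Z.divide_lcm_r.
Qed.

Lemma lcm_list_least l X : (forall x, In x l -> (x | X)) -> (fold_right Z.lcm 1 l | X).
Proof.
  induction l; simpl; intros H. apply Z.divide_1_l.
  apply Z.lcm_least; auto.
Qed.

Lemma lcm_list_pos l : (forall x, In x l -> 0 < x) -> 0 < fold_right Z.lcm 1 l.
Proof.
  induction l; simpl; intros H. lia.
  pose proof (Z.lcm_nonneg a (fold_right Z.lcm 1 l)).
  assert (Z.lcm a (fold_right Z.lcm 1 l) <> 0).
  { rewrite Z.lcm_eq_0. pose proof (H a (or_introl eq_refl)).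
    specialize (IHl (fun x Hx => H x (or_intror Hx))). lia. }
  lia.
Qed.

Lemma lcmZ_div L M i : (i < L)%nat -> (M i | lcmZ L M).
Proof.
  intros. apply lcm_list_div. apply in_map. apply in_seq. lia.
Qed.

Lemma lcmZ_least L M X : (forall i, (i < L)%nat -> (M i | X)) -> (lcmZ L M | X).
Proof.
  intros H. apply lcm_list_least. intros x Hx. apply in_map_iff in Hx.
  destruct Hx as [i [<- Hi]]. apply in_seq in Hi. apply H; lia.
Qed.

Lemma lcmZ_pos L M : (forall i, (i < L)%nat -> 0 < M i) -> 0 < lcmZ L M.
Proof.
  intros H. apply lcm_list_pos. intros x Hx. apply in_map_iff in Hx.
  destruct Hx as [i [<- Hi]]. apply in_seq in Hi. apply H; lia.
Qed.

Lemma fold_min_init t a : fold_left Z.min t a <= a.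
Proof.
  revert a. induction t; simpl; intros b. lia.
  pose proof (IHt (Z.min b a)). lia.
Qed.

Lemma fold_min_le t a x : In x (a :: t) -> fold_left Z.min t a <= x.
Proof.
  revert a. induction t; simpl; intros b H. destruct H; [lia|contradiction].
  destruct H as [H|[H|H]].
  - subst. pose proof (fold_min_init t (Z.min x a)). lia.
  - subst. pose proof (fold_min_init t (Z.min b x)). lia.
  - apply IHt. right; auto.
Qed.

Lemma list_min_le l x : In x l -> list_min l <= x.
Proof. destruct l; simpl. contradiction. apply fold_min_le. Qed.

Lemma fold_max_le t a B : a <= B -> (forall x, In x t -> x <= B) -> fold_left Z.max t a <= B.
Proof.
  revert a. induction t; simpl; intros b Hb H. auto.
  apply IHt. pose proof (H a (or_introl eq_refl)). lia. auto.
Qed.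

Lemma list_max_le l B : l <> nil -> (forall x, In x l -> x <= B) -> Defs.list_max l <= B.
Proof.
  destruct l; simpl; intros Hn H. congruence.
  apply fold_max_le; auto.
Qed.

Definition mkA (P : nat -> Z) k i := Z.gcd (P k) (P i).
Definition GkiA P k i := P k / mkA P k i.
Definition GikA P k i := P i / mkA P k i.
Definition qhA P k (x : nat -> Z) i := round (IZR (x i - x k) / IZR (mkA P k i)).
Definition invA P k i :=
  match find_from (fun b => (GkiA P k i * b) mod GikA P k i =? 1 mod GikA P k i) 0
                    (Z.to_nat (GikA P k i)) with Some b => b | None => 0 end.
Definition xiA P k x i := (qhA P k x i * invA P k i) mod GikA P k i.
Definition othersA m k := filter (fun i => negb (Nat.eqb i k)) (seq 0 m).
Definition boundA m P k := fold_right Z.mul 1 (map (GikA P k) (othersA m k)).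
Definition predA m P k x :=
  fun y => forallb (fun i => (y - xiA P k x i) mod GikA P k i =? 0) (othersA m k).

Lemma alg_A_eq m P k x : alg_A m P k x =
  match find_from (predA m P k x) 0 (Z.to_nat (boundA m P k)) with
  | None => None
  | Some nk => Some (fun i => if Nat.eqb i k then nk
                      else (nk * GkiA P k i - qhA P k x i) / GikA P k i)
  end.
Proof. reflexivity. Qed.

Lemma in_othersA m k i : In i (othersA m k) <-> (i < m)%nat /\ i <> k.
Proof.
  unfold othersA. rewrite filter_In, in_seq.
  destruct (Nat.eqb_spec i k); simpl; intuition; lia.
Qed.

Lemma mod_eq_divide a b n : n <> 0 -> a mod n = b mod n -> (n | a - b).
Proof.
  intros Hn E. pose proof (Z.div_mod a n Hn). pose proof (Z.div_mod b n Hn).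
  exists (a / n - b / n). lia.
Qed.

Section PerI.
Variables (P : nat -> Z) (k i : nat) (x t : nat -> Z).
Hypotheses (Pk : 0 < P k) (Pi : 0 < P i)
  (Hdiv : (Z.gcd (P k) (P i) | t i - t k))
  (Herr : 2 * Z.abs ((x i - t i) - (x k - t k)) < Z.gcd (P k) (P i)).

Lemma g_pos : 0 < mkA P k i.
Proof.
  unfold mkA. pose proof (Z.gcd_nonneg (P k) (P i)).
  assert (Z.gcd (P k) (P i) <> 0) by (rewrite Z.gcd_eq_0; lia). lia.
Qed.

Lemma Pi_eq : P i = mkA P k i * GikA P k i.
Proof. unfold GikA.
  pose proof g_pos. apply Z_div_exact_full_2. lia.
  apply Z.mod_divide. lia. apply Z.gcd_divide_r. Qed.

Lemma Pk_eq : P k = mkA P k i * GkiA P k i.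
Proof. unfold GkiA.
  pose proof g_pos. apply Z_div_exact_full_2. lia.
  apply Z.mod_divide. lia. apply Z.gcd_divide_l. Qed.

Lemma Gik_pos : 0 < GikA P k i.
Proof. pose proof Pi_eq. pose proof g_pos. nia. Qed.

Lemma qh_eq : mkA P k i * qhA P k x i = t i - t k.
Proof.
  unfold qhA. pose proof g_pos.
  replace (x i - x k) with ((t i - t k) + ((x i - t i) - (x k - t k))) by lia.
  rewrite round_exact; auto.
  symmetry. apply Z_div_exact_full_2. lia. apply Z.mod_divide; auto. lia.
Qed.

Lemma inv_spec : (GikA P k i | GkiA P k i * invA P k i - 1).
Proof.
  pose proof g_pos. pose proof Gik_pos.
  assert (Z.gcd (GkiA P k i) (GikA P k i) = 1) as Hc.
  { apply Z.gcd_div_gcd. lia. reflexivity. }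
  destruct (Z.gcd_bezout _ _ _ Hc) as [u [v Huv]].
  set (f := fun b => (GkiA P k i * b) mod GikA P k i =? 1 mod GikA P k i).
  assert (f (u mod GikA P k i) = true) as Hf.
  { unfold f. apply Z.eqb_eq. rewrite Z.mul_mod_idemp_r by lia.
    replace (GkiA P k i * u) with (1 + (- v) * GikA P k i) by lia.
    apply Z.mod_add. lia. }
  pose proof (Z.mod_pos_bound u (GikA P k i) ltac:(lia)).
  destruct (find_from_complete f (Z.to_nat (GikA P k i)) 0 _ Hf ltac:(lia))
    as [b [Hb [_ Hfb]]].
  unfold invA. fold f. rewrite Hb. unfold f in Hfb. apply Z.eqb_eq in Hfb.
  apply mod_eq_divide in Hfb; [|lia].
  destruct Hfb as [w Hw]. exists w. lia.
Qed.

Lemma pred_iff y : ((y - xiA P k x i) mod GikA P k i = 0) <->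
                   (P i | y * P k + t k - t i).
Proof.
  pose proof g_pos. pose proof Gik_pos. pose proof qh_eq as Hq.
  destruct inv_spec as [w Hw].
  rewrite Z.mod_divide by lia.
  rewrite Pi_eq, Pk_eq.
  replace (y * (mkA P k i * GkiA P k i) + t k - t i)
     with (mkA P k i * (y * GkiA P k i - qhA P k x i)) by lia.
  rewrite Z.mul_divide_cancel_l by lia.
  unfold xiA. set (G := GikA P k i). set (Gk := GkiA P k i). set (q := qhA P k x i).
  set (iv := invA P k i). fold G Gk iv in Hw. fold q.
  pose proof (Z.div_mod (q * iv) G ltac:(lia)).
  set (r := (q * iv) mod G) in *. set (d := q * iv / G) in *.
  split.
  - intros [c Hc]. exists (c * Gk - d * Gk + q * w).
    assert (y = c * G + r) as Ey by lia. rewrite Ey. 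
    assert (r = q * iv - G * d) as Er by lia. rewrite Er.
    assert (Gk * iv = w * G + 1) as Ew by lia.
    transitivity (c * G * Gk + q * (Gk * iv) - G * d * Gk - q). ring.
    rewrite Ew. ring.
  - intros [c Hc]. exists (c * iv - y * w + d).
    assert (r = q * iv - G * d) as Er by lia. rewrite Er.
    assert (q = y * Gk - c * G) as Eq by lia. rewrite Eq.
    assert (Gk * iv = w * G + 1) as Ew by lia.
    transitivity (y - y * (Gk * iv) + c * G * iv + G * d). ring.
    rewrite Ew. ring.
Qed.

Lemma f_eq y : (P i | y * P k + t k - t i) ->
  (y * GkiA P k i - qhA P k x i) / GikA P k i * P i + t i = y * P k + t k.
Proof.
  intros Hd. pose proof g_pos. pose proof Gik_pos. pose proof qh_eq as Hq.
  pose proof Pi_eq as E1. pose proof Pk_eq as E2.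
  rewrite E1, E2 in Hd.
  replace (y * (mkA P k i * GkiA P k i) + t k - t i)
     with (mkA P k i * (y * GkiA P k i - qhA P k x i)) in Hd by lia.
  apply Z.mul_divide_cancel_l in Hd; [|lia].
  destruct Hd as [c Hc]. rewrite Hc, Z_div_mult by lia.
  rewrite E1, E2. 
  assert (c * GikA P k i = y * GkiA P k i - qhA P k x i) as Hc' by lia.
  transitivity (mkA P k i * (c * GikA P k i) + t i). ring.
  rewrite Hc'. lia.
Qed.

End PerI.

Lemma alg_A_spec m P k x t z :
  (k < m)%nat -> (forall i, (i < m)%nat -> 0 < P i) ->
  (forall i, (i < m)%nat -> i <> k ->
     (Z.gcd (P k) (P i) | t i - t k) /\ 2 * Z.abs ((x i - t i) - (x k - t k)) < Z.gcd (P k) (P i)) ->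
  0 <= z -> z < boundA m P k ->
  (forall i, (i < m)%nat -> i <> k -> (P i | z * P k + t k - t i)) ->
  exists f, alg_A m P k x = Some f /\ 0 <= f k <= z /\ forall i, (i < m)%nat -> f i * P i + t i = f k * P k + t k.
Proof.
  intros Hk HP Hi Hz0 Hzb Hz. rewrite alg_A_eq.
  assert (predA m P k x z = true) as Hpz.
  { unfold predA. apply forallb_forall. intros i Hin. apply in_othersA in Hin.
    destruct Hin as [Him Hik]. apply Z.eqb_eq.
    destruct (Hi i Him Hik). apply (pred_iff P k i x t); auto. }
  destruct (find_from_complete _ (Z.to_nat (boundA m P k)) 0 z Hpz ltac:(lia))
    as [y [Hy [Hy1 Hpy]]].
  rewrite Hy. eexists; split; [reflexivity|]. cbv beta. rewrite Nat.eqb_refl. split; [lia|].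
  intros i Him. destruct (Nat.eqb_spec i k) as [->|Hik]. reflexivity.
  destruct (Hi i Him Hik) as [H1 H2].
  unfold predA in Hpy. rewrite forallb_forall in Hpy.
  specialize (Hpy i (proj2 (in_othersA m k i) (conj Him Hik))). apply Z.eqb_eq in Hpy.
  apply (pred_iff P k i x t) in Hpy; auto.
  apply f_eq; auto.
Qed.

Lemma prod_div l a : In a l -> (a | fold_right Z.mul 1 l).
Proof.
  induction l; simpl; intros H. contradiction.
  destruct H. subst. apply Z.divide_factor_l.
  apply Z.divide_mul_r. auto.
Qed.

Lemma prod_pos l : (forall a, In a l -> 0 < a) -> 0 < fold_right Z.mul 1 l.
Proof.
  induction l; simpl; intros H. lia.
  pose proof (H a (or_introl eq_refl)). specialize (IHl (fun x Hx => H x (or_intror Hx))). nia.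
Qed.

Lemma M_pos L M : 0 < M 0%nat -> (forall i, (S i < L)%nat -> M i < M (S i)) ->
  forall i, (i < L)%nat -> 0 < M i.
Proof.
  intros H0 HS i. induction i; intros Hi. auto.
  specialize (HS i Hi). specialize (IHi ltac:(lia)). lia.
Qed.

Lemma mod_char N d N' : 0 < d -> 0 <= N' < d -> (d | N' - N) -> N' = N mod d.
Proof.
  intros Hd HN [c Hc]. apply (Z.mod_unique N d (- c)). lia. lia.
Qed.

Lemma stage1_spec L M k rt N T :
  (1 <= L)%nat -> (forall i, (i < L)%nat -> 0 < M i) ->
  (forall i, (i < L)%nat -> Z.abs (rt i - N mod M i) <= T) ->
  ((2 <= L)%nat -> (k < L)%nat /\
     forall i, (i < L)%nat -> i <> k -> 4 * T < Z.gcd (M k) (M i)) ->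
  exists K, stage1 L M k rt = Some K /\
    (forall i, (i < L)%nat -> K i * M i + N mod M i = N mod lcmZ L M) /\
    exists E, Nhat_grp L M K rt = N mod lcmZ L M + E /\ Z.abs E <= T.
Proof.
  intros HL HM He Hk.
  set (d := lcmZ L M).
  assert (0 < d) as Hd by (apply lcmZ_pos; auto).
  assert (forall K, (forall i, (i < L)%nat -> K i * M i + N mod M i = N mod d) ->
     exists E, Nhat_grp L M K rt = N mod d + E /\ Z.abs E <= T) as HN.
  { intros K HK. exists (round (IZR (sumZ L (fun i => rt i - N mod M i)) / INR L)).
    split.
    - unfold Nhat_grp.
      rewrite (sumZ_ext L _ (fun i => N mod d + (rt i - N mod M i))).
      2:{ intros i Hi. rewrite <- (HK i Hi). lia. }
      rewrite sumZ_add, sumZ_const, plus_IZR, mult_IZR, <- INR_IZR_INZ.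
      rewrite <- round_IZR_add. f_equal. field. apply not_0_INR. lia.
    - apply round_bounded. lia. apply sumZ_bound. auto. }
  destruct (Nat.le_gt_cases 2 L) as [H2|H2].
  - destruct (Hk H2) as [HkL Hg].
    unfold stage1. replace (2 <=? L)%nat with true by (symmetry; apply Nat.leb_le; auto).
    pose proof (HM k HkL) as Mk.
    assert (M k | d) as Mkd by (apply lcmZ_div; auto).
    destruct Mkd as [dk Hdk].
    assert (0 < dk) by nia.
    set (z := (N / M k) mod dk).
    assert (0 <= z < dk) by (apply Z.mod_pos_bound; lia).
    assert (dk <= boundA L M k) as Hb.
    { assert (0 < boundA L M k) as Hbp.
      { apply prod_pos. intros a Ha. apply in_map_iff in Ha. destruct Ha as [i [<- Hi]].
        apply in_othersA in Hi. apply (Gik_pos M k i rt rt); apply HM; tauto. }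
      assert (d | M k * boundA L M k) as Hdv.
      { apply lcmZ_least. intros i Hi. destruct (Nat.eq_dec i k) as [->|Hik].
        apply Z.divide_factor_l.
        assert (GikA M k i | boundA L M k).
        { apply prod_div. apply in_map. apply in_othersA. auto. }
        apply Z.divide_trans with (M k * GikA M k i).
        2:{ apply Z.mul_divide_mono_l. auto. }
        rewrite (Pk_eq M k i rt rt Mk) at 1.
        rewrite (Pi_eq M k i rt rt Mk).
        exists (GkiA M k i). ring. }
      pose proof (Z.divide_pos_le _ _ (Z.mul_pos_pos _ _ Mk Hbp) Hdv) as Hle.
      rewrite Hdk in Hle. apply (Z.mul_le_mono_pos_r _ _ (M k)); auto. lia. }
    destruct (alg_A_spec L M k rt (fun i => N mod M i) z HkL HM) as [f [Hf [Hfk Hfi]]].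
    + intros i Hi Hik. split.
      * cbv beta. replace (N mod M i - N mod M k) with ((N mod M i - N) - (N mod M k - N)) by lia.
        apply Z.divide_sub_r.
        -- apply Z.divide_trans with (M i). apply Z.gcd_divide_r.
           pose proof (HM i Hi). pose proof (Z.div_mod N (M i) ltac:(lia)).
           exists (- (N / M i)). lia.
        -- apply Z.divide_trans with (M k). apply Z.gcd_divide_l.
           pose proof (Z.div_mod N (M k) ltac:(lia)).
           exists (- (N / M k)). lia.
      * pose proof (He i Hi). pose proof (He k HkL). pose proof (Hg i Hi Hik). lia.
    + lia.
    + lia.
    + intros i Hi Hik.
      pose proof (HM i Hi). pose proof (Z.div_mod N (M i) ltac:(lia)).
      pose proof (Z.div_mod N (M k) ltac:(lia)).
      pose proof (Z.div_mod (N / M k) dk ltac:(lia)) as H6.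
      assert (M i | d) as [c Hc] by (apply lcmZ_div; auto).
      exists (N / M i - (N / M k / dk) * c). fold z in H6. cbv beta.
      assert (z * M k = N / M k * M k - dk * (N / M k / dk) * M k) by lia.
      assert (dk * (N / M k / dk) * M k = (N / M k / dk) * (c * M i)) by (rewrite <- Hc, Hdk; ring).
      lia.
    + exists f. split; [exact Hf|].
      assert (forall i, (i < L)%nat -> f i * M i + N mod M i = N mod d) as HK.
      { intros i Hi. rewrite Hfi by auto.
        pose proof (Z.mod_pos_bound N (M k) Mk).
        apply mod_char; auto.
        - split. nia. assert (f k <= dk - 1) by lia. nia.
        - apply lcmZ_least. intros j Hj. rewrite <- (Hfi j Hj).
          pose proof (HM j Hj). pose proof (Z.div_mod N (M j) ltac:(lia)).
          exists (f j - N / M j). lia. }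
      split; auto.
  - assert (L = 1%nat) by lia. subst L.
    unfold stage1. simpl (2 <=? 1)%nat. cbv iota.
    exists (fun _ => 0). split; [reflexivity|].
    assert (d = M 0%nat) as Ed.
    { unfold d, lcmZ. simpl. rewrite Z.lcm_1_r. pose proof (HM 0%nat ltac:(lia)). lia. }
    assert (HK : forall i, (i < 1)%nat -> 0 * M i + N mod M i = N mod d).
    { intros i Hi. assert (i = 0%nat) by lia. subst. rewrite Ed. lia. }
    split; auto.
Qed.

Lemma two_cond a b N xa xb Ta Tb : 0 < a -> 0 < b ->
  Z.abs (xa - N mod a) <= Ta -> Z.abs (xb - N mod b) <= Tb ->
  4 * Ta < Z.gcd a b -> 4 * Tb < Z.gcd a b ->
  (Z.gcd a b | N mod b - N mod a) /\
  2 * Z.abs ((xb - N mod b) - (xa - N mod a)) < Z.gcd a b.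
Proof.
  intros Ha Hb H1 H2 H3 H4. split; [|lia].
  replace (N mod b - N mod a) with ((N mod b - N) - (N mod a - N)) by lia.
  pose proof (Z.div_mod N a ltac:(lia)). pose proof (Z.div_mod N b ltac:(lia)).
  apply Z.divide_sub_r.
  - apply Z.divide_trans with b. apply Z.gcd_divide_r. exists (- (N / b)). lia.
  - apply Z.divide_trans with a. apply Z.gcd_divide_l. exists (- (N / a)). lia.
Qed.

Lemma two_pred a b N : 0 < a -> 0 < b -> (b | N / a * a + N mod a - N mod b).
Proof.
  intros Ha Hb. pose proof (Z.div_mod N a ltac:(lia)). pose proof (Z.div_mod N b ltac:(lia)).
  exists (N / b). lia.
Qed.

Lemma two_bound a b N : 0 < a -> 0 < b -> 0 <= N < Z.lcm a b -> N / a < b / Z.gcd a b.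
Proof.
  intros Ha Hb HN. unfold Z.lcm in HN.
  assert (0 < Z.gcd a b).
  { pose proof (Z.gcd_nonneg a b). assert (Z.gcd a b <> 0) by (rewrite Z.gcd_eq_0; lia). lia. }
  assert (0 <= b / Z.gcd a b) by (apply Z.div_pos; lia).
  rewrite Z.abs_eq in HN by nia.
  apply Z.div_lt_upper_bound; lia.
Qed.

Lemma two_X a b N y w : 0 < a -> 0 < b -> 0 <= N < Z.lcm a b -> 0 <= y <= N / a ->
  w * b + N mod b = y * a + N mod a -> y * a + N mod a = N.
Proof.
  intros Ha Hb HN Hy Hw.
  pose proof (Z.div_mod N a ltac:(lia)). pose proof (Z.div_mod N b ltac:(lia)).
  pose proof (Z.mod_pos_bound N a Ha).
  assert (Z.lcm a b | y * a + N mod a - N) as [c Hc].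
  { apply Z.lcm_least. exists (y - N / a). lia. exists (w - N / b). lia. }
  assert (0 < Z.lcm a b).
  { pose proof (Z.lcm_nonneg a b). assert (Z.lcm a b <> 0) by (rewrite Z.lcm_eq_0; lia). lia. }
  assert (y * a <= N / a * a) by nia.
  assert (c = 0) by nia. subst. lia.
Qed.

Lemma err_T (L : nat) (M rt : nat -> Z) (N : Z) (tau : R) :
  (forall i, (i < L)%nat -> (Rabs (IZR (rt i - N mod M i)) <= tau)%R) ->
  forall i, (i < L)%nat -> Z.abs (rt i - N mod M i) <= up tau - 1.
Proof.
  intros H i Hi. apply IZR_le_floor. rewrite <- Rabs_Zabs. auto.
Qed.

Lemma T_lt (T : Z) (tau g : R) : (IZR T <= tau)%R -> (tau < g / 4)%R -> (IZR (4 * T) < g)%R.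
Proof. intros. rewrite mult_IZR. simpl. lra. Qed.

Lemma stage1_hyp L M k (tau : R) :
  (1 <= L)%nat ->
  (tau < G_grp L M)%R ->
  ((2 <= L)%nat -> (k < L)%nat /\
     forall i, (i < L)%nat -> min_gcd L M i <= min_gcd L M k) ->
  ((2 <= L)%nat -> (k < L)%nat /\
     forall i, (i < L)%nat -> i <> k -> 4 * (up tau - 1) < Z.gcd (M k) (M i)).
Proof.
  intros HL Ht Hk H2. destruct (Hk H2) as [HkL Hmax]. split; auto.
  intros i Hi Hik.
  unfold G_grp in Ht. replace (2 <=? L)%nat with true in Ht by (symmetry; apply Nat.leb_le; auto).
  assert (Defs.list_max (map (min_gcd L M) (seq 0 L)) <= min_gcd L M k) as H1.
  { apply list_max_le.
    - destruct L. lia. simpl. discriminate.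
    - intros x Hx. apply in_map_iff in Hx. destruct Hx as [j [<- Hj]].
      apply in_seq in Hj. apply Hmax. lia. }
  assert (min_gcd L M k <= Z.gcd (M k) (M i)) as H3.
  { unfold min_gcd. apply list_min_le. apply (in_map (fun q => Z.gcd (M k) (M q))). apply filter_In. split.
    apply in_seq. lia. destruct (Nat.eqb_spec i k); simpl; auto. }
  apply lt_IZR. rewrite mult_IZR. pose proof (floor_le tau).
  apply IZR_le in H1. apply IZR_le in H3. simpl. lra.
Qed.

Lemma n_eq (d l Ki Mi N : Z) : 0 < Mi -> (Mi | d) ->
  Ki * Mi + N mod Mi = N mod d -> l * d + N mod d = N ->
  (l * d / Mi + Ki) * Mi = N - N mod Mi.
Proof.
  intros HM [c Hc] H1 H2. rewrite Hc, Z.mul_assoc, Z_div_mult by lia.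
  rewrite Hc in H1, H2. lia.
Qed.

Theorem theorem2 (L1 L2 : nat) (M1 M2 : nat -> Z) (N : Z)
  (rt1 rt2 : nat -> Z) (tau1 tau2 : R) (k1 k2 k0 : nat) :
  (1 <= L1)%nat -> (1 <= L2)%nat ->
  0 < M1 0%nat -> (forall i, (S i < L1)%nat -> M1 i < M1 (S i)) ->
  0 < M2 0%nat -> (forall i, (S i < L2)%nat -> M2 i < M2 (S i)) ->
  lcmZ L1 M1 <> lcmZ L2 M2 ->
  0 <= N < Z.lcm (lcmZ L1 M1) (lcmZ L2 M2) ->
  (forall i, (i < L1)%nat -> 0 <= rt1 i <= M1 i - 1) ->
  (forall i, (i < L2)%nat -> 0 <= rt2 i <= M2 i - 1) ->
  (forall i, (i < L1)%nat -> (Rabs (IZR (rt1 i - N mod M1 i)) <= tau1)%R) ->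
  (forall i, (i < L2)%nat -> (Rabs (IZR (rt2 i - N mod M2 i)) <= tau2)%R) ->
  (tau1 < Rmin (G_grp L1 M1) (IZR (Z.gcd (lcmZ L1 M1) (lcmZ L2 M2)) / 4))%R ->
  (tau2 < Rmin (G_grp L2 M2) (IZR (Z.gcd (lcmZ L1 M1) (lcmZ L2 M2)) / 4))%R ->
  ((2 <= L1)%nat -> (k1 < L1)%nat /\
     forall i, (i < L1)%nat -> min_gcd L1 M1 i <= min_gcd L1 M1 k1) ->
  ((2 <= L2)%nat -> (k2 < L2)%nat /\
     forall i, (i < L2)%nat -> min_gcd L2 M2 i <= min_gcd L2 M2 k2) ->
  (k0 < 2)%nat ->
  exists (n1h n2h : nat -> Z) (Nh : Z),
    two_stage L1 M1 rt1 k1 L2 M2 rt2 k2 k0 = Some (n1h, n2h, Nh) /\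
    (forall i, (i < L1)%nat -> n1h i = (N - N mod M1 i) / M1 i) /\
    (forall i, (i < L2)%nat -> n2h i = (N - N mod M2 i) / M2 i) /\
    Z.abs (Nh - N) <=
      round ((INR L1 * tau1 + INR L2 * tau2) / INR (L1 + L2)).
Proof.
  intros HL1 HL2 HM10 HM1S HM20 HM2S Hneq HN Hr1 Hr2 He1 He2 Ht1 Ht2 Hk1 Hk2 Hk0.
  pose proof (M_pos L1 M1 HM10 HM1S) as HM1.
  pose proof (M_pos L2 M2 HM20 HM2S) as HM2.
  pose proof (err_T _ _ _ _ _ He1) as HT1.
  pose proof (err_T _ _ _ _ _ He2) as HT2.
  set (T1 := up tau1 - 1) in *. set (T2 := up tau2 - 1) in *.
  set (d1 := lcmZ L1 M1) in *. set (d2 := lcmZ L2 M2) in *.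
  assert (0 < d1) as Hd1 by (apply lcmZ_pos; auto).
  assert (0 < d2) as Hd2 by (apply lcmZ_pos; auto).
  assert (4 * T1 < Z.gcd d1 d2) as Hg1.
  { apply lt_IZR. apply (T_lt _ tau1). apply floor_le.
    pose proof (Rmin_r (G_grp L1 M1) (IZR (Z.gcd d1 d2) / 4)). lra. }
  assert (4 * T2 < Z.gcd d1 d2) as Hg2.
  { apply lt_IZR. apply (T_lt _ tau2). apply floor_le.
    pose proof (Rmin_r (G_grp L2 M2) (IZR (Z.gcd d1 d2) / 4)). lra. }
  assert (S1 := stage1_hyp L1 M1 k1 tau1 HL1
     ltac:(pose proof (Rmin_l (G_grp L1 M1) (IZR (Z.gcd d1 d2) / 4)); lra) Hk1).
  assert (S2 := stage1_hyp L2 M2 k2 tau2 HL2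
     ltac:(pose proof (Rmin_l (G_grp L2 M2) (IZR (Z.gcd d1 d2) / 4)); lra) Hk2).
  destruct (stage1_spec L1 M1 k1 rt1 N T1 HL1 HM1 HT1 S1) as [K1 [HK1 [HKi1 [E1 [HE1 HE1b]]]]].
  destruct (stage1_spec L2 M2 k2 rt2 N T2 HL2 HM2 HT2 S2) as [K2 [HK2 [HKi2 [E2 [HE2 HE2b]]]]].
  fold d1 in HKi1, HE1. fold d2 in HKi2, HE2.
  set (P := fun j => if Nat.eqb j 0 then d1 else d2).
  set (x := fun j => if Nat.eqb j 0 then Nhat_grp L1 M1 K1 rt1 else Nhat_grp L2 M2 K2 rt2).
  set (t := fun j => if Nat.eqb j 0 then N mod d1 else N mod d2).
  assert (exists l, alg_A 2 P k0 x = Some l /\ l 0%nat * d1 + N mod d1 = N /\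
             l 1%nat * d2 + N mod d2 = N) as [l [Hl [Hl1 Hl2]]].
  { assert (Z.abs (Nhat_grp L1 M1 K1 rt1 - N mod d1) <= T1) as X1 by (rewrite HE1; lia).
    assert (Z.abs (Nhat_grp L2 M2 K2 rt2 - N mod d2) <= T2) as X2 by (rewrite HE2; lia).
    destruct k0 as [|[|k0]]; [| |lia].
    - destruct (alg_A_spec 2 P 0 x t (N / d1)) as [f [Hf [Hf0 Hfi]]].
      + lia.
      + intros i Hi; destruct i as [|[|i]]; [exact Hd1|exact Hd2|lia].
      + intros i Hi Hi0; destruct i as [|[|i]]; [lia| |lia].
        exact (two_cond d1 d2 N _ _ T1 T2 Hd1 Hd2 X1 X2 Hg1 Hg2).
      + apply Z.div_pos; lia.
      + change (boundA 2 P 0) with (GikA P 0 1 * 1). rewrite Z.mul_1_r.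
        exact (two_bound d1 d2 N Hd1 Hd2 HN).
      + intros i Hi Hi0; destruct i as [|[|i]]; [lia| |lia].
        exact (two_pred d1 d2 N Hd1 Hd2).
      + exists f. split; auto.
        assert (f 0%nat * d1 + N mod d1 = N) as F0.
        { apply (two_X d1 d2 N _ (f 1%nat) Hd1 Hd2 HN Hf0). exact (Hfi 1%nat ltac:(lia)). }
        split; auto. transitivity (f 0%nat * d1 + N mod d1); [exact (Hfi 1%nat ltac:(lia)) | exact F0].
    - rewrite Z.gcd_comm in Hg1, Hg2. rewrite Z.lcm_comm in HN.
      destruct (alg_A_spec 2 P 1 x t (N / d2)) as [f [Hf [Hf0 Hfi]]].
      + lia.
      + intros i Hi; destruct i as [|[|i]]; [exact Hd1|exact Hd2|lia].
      + intros i Hi Hi0; destruct i as [|[|i]]; [|lia|lia].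
        exact (two_cond d2 d1 N _ _ T2 T1 Hd2 Hd1 X2 X1 Hg2 Hg1).
      + apply Z.div_pos; lia.
      + change (boundA 2 P 1) with (GikA P 1 0 * 1). rewrite Z.mul_1_r.
        exact (two_bound d2 d1 N Hd2 Hd1 HN).
      + intros i Hi Hi0; destruct i as [|[|i]]; [|lia|lia].
        exact (two_pred d2 d1 N Hd2 Hd1).
      + exists f. split; auto.
        assert (f 1%nat * d2 + N mod d2 = N) as F0.
        { apply (two_X d2 d1 N _ (f 0%nat) Hd2 Hd1 HN Hf0). exact (Hfi 0%nat ltac:(lia)). }
        split; auto. transitivity (f 1%nat * d2 + N mod d2); [exact (Hfi 0%nat ltac:(lia)) | exact F0]. }
  unfold two_stage. rewrite HK1, HK2. cbv zeta. fold d1 d2.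
  change (alg_A 2 (fun j => if Nat.eqb j 0 then d1 else d2) k0
     (fun j => if Nat.eqb j 0 then Nhat_grp L1 M1 K1 rt1 else Nhat_grp L2 M2 K2 rt2))
    with (alg_A 2 P k0 x).
  rewrite Hl.
  eexists; eexists; eexists; split; [reflexivity|].
  assert (N1 : forall i, (i < L1)%nat -> (l 0%nat * d1 / M1 i + K1 i) * M1 i = N - N mod M1 i).
  { intros i Hi. apply n_eq; auto. apply lcmZ_div; auto. }
  assert (N2 : forall i, (i < L2)%nat -> (l 1%nat * d2 / M2 i + K2 i) * M2 i = N - N mod M2 i).
  { intros i Hi. apply n_eq; auto. apply lcmZ_div; auto. }
  split; [|split].
  - intros i Hi. cbv beta. rewrite <- N1 by auto. rewrite Z_div_mult; auto. specialize (HM1 i Hi); lia.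
  - intros i Hi. cbv beta. rewrite <- N2 by auto. rewrite Z_div_mult; auto. specialize (HM2 i Hi); lia.
  - rewrite (sumZ_ext L1 _ (fun i => N + (rt1 i - N mod M1 i))) by (intros i Hi; rewrite N1 by auto; lia).
    rewrite (sumZ_ext L2 _ (fun i => N + (rt2 i - N mod M2 i))) by (intros i Hi; rewrite N2 by auto; lia).
    rewrite !sumZ_add, !sumZ_const.
    set (SS1 := sumZ L1 (fun i => rt1 i - N mod M1 i)).
    set (SS2 := sumZ L2 (fun i => rt2 i - N mod M2 i)).
    assert (INR (L1 + L2) <> 0)%R by (apply not_0_INR; lia).
    replace (IZR (Z.of_nat L1 * N + SS1 + (Z.of_nat L2 * N + SS2)) / INR (L1 + L2))%R
      with (IZR N + IZR (SS1 + SS2) / INR (L1 + L2))%R.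
    2:{ rewrite !plus_IZR, !mult_IZR, <- !INR_IZR_INZ, plus_INR. rewrite plus_INR in H. field. auto. }
    rewrite round_IZR_add. replace (N + round (IZR (SS1 + SS2) / INR (L1 + L2)) - N)
      with (round (IZR (SS1 + SS2) / INR (L1 + L2))) by lia.
    apply round_abs_le.
    pose proof (sumZ_boundR L1 _ tau1 He1) as B1. fold SS1 in B1.
    pose proof (sumZ_boundR L2 _ tau2 He2) as B2. fold SS2 in B2.
    assert (0 < INR (L1 + L2))%R by (apply lt_0_INR; lia).
    unfold Rdiv. rewrite Rabs_mult, Rabs_inv, (Rabs_right (INR (L1 + L2))) by lra.
    apply Rmult_le_compat_r. left. apply Rinv_0_lt_compat. lra.
    rewrite plus_IZR. pose proof (Rabs_triang (IZR SS1) (IZR SS2)). lra.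
Qed.
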